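(* For every $n\equiv 3\pmod 4$ with $n\ge 7$, there exists a Heffter array $H(n;3)$.
   Context: A Heffter array $H(n;k)$ is an $n\times n$ array in which some cells are filled with nonzero integers and the others are empty, such that: each row and each column contains exactly $k$ filled cells; the entries of every row and of every column sum to $0$ modulo $2nk+1$; and for each integer $1\le x\le nk$, exactly one of $x$ or $-x$ appears in the array, and it appears exactly once. *)

(* Defs.v *)
From HB Require Import structures.
From mathcomp Require Import all_boot all_order all_algebra.
Set Implicit Arguments. Unset Strict Implicit. Unset Printing Implicit Defensive.
Import Order.TTheory GRing.Theory Num.Theory.

(* A partially filled n x n array of integers: None = empty cell. *)
Definition parray (n : nat) := 'I_n -> 'I_n -> option int.

Definition entry (o : option int) : int := if o is Some x then x else 0%R.

Definition is_heffter (n k : nat) (A : parray n) : Prop :=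
  (forall i : 'I_n, #|[set j : 'I_n | A i j != None]| = k) /\
  (forall j : 'I_n, #|[set i : 'I_n | A i j != None]| = k) /\
  (forall (i j : 'I_n) (x : int), A i j = Some x ->
      (1 <= `|x|%N <= n * k)%N) /\
  (forall i : 'I_n,
      ((\sum_(j < n) entry (A i j)) %% (Posz (2 * n * k + 1)))%Z = 0%R) /\
  (forall j : 'I_n,
      ((\sum_(i < n) entry (A i j)) %% (Posz (2 * n * k + 1)))%Z = 0%R) /\
  (forall x : nat, (1 <= x <= n * k)%N ->
      #|[set p : 'I_n * 'I_n |
          (A p.1 p.2 == Some (Posz x)) || (A p.1 p.2 == Some (- Posz x)%R)]| = 1%N).
Arguments is_heffter : clear implicits.

(* Main.v *)
Require Import Defs.
From mathcomp Require Import all_boot all_order all_algebra.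
From mathcomp Require Import zify.
Set Implicit Arguments. Unset Strict Implicit. Unset Printing Implicit Defensive.
Import Order.TTheory GRing.Theory Num.Theory.

Definition nxt m i := if i.+1 == 4 * m + 3 then 0 else i.+1.
Definition prv m k := if k == 0 then 4 * m + 2 else k.-1.
Definition pp m j :=
  if j <= 2 * m then (if j %% 2 == 1 then 3 * m + 1 - j %/ 2 else m + 1 + j %/ 2)
  else (if (j - (2 * m + 1)) %% 2 == 1 then 4 * m + 2 - (j - (2 * m + 1)) %/ 2
        else (j - (2 * m + 1)) %/ 2).
Definition vv m j : int :=
  if j %% 2 == 1 then (- Posz (6 * m + 5 + pp m j))%R else Posz (6 * m + 5 + pp m j).
Definition av m i : int := (Posz (2 * m + 2) - vv m (prv m i))%R.
Definition bv m i : int := if i == 0 then (- Posz (2 * (4 * m + 3)))%R else (vv m i.-1 + vv m i)%R.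
Definition cv m i : int := (- Posz (2 * m + 2) - vv m i)%R.
Definition Aval m i k : option int :=
  if k == i then Some (av m i) else if k == nxt m i then Some (bv m i)
  else if k == nxt m (nxt m i) then Some (cv m i) else None.

Lemma pp_bound m j : j < 4 * m + 3 -> pp m j <= 4 * m + 2.
Proof. rewrite /pp => H; repeat case: ifP; lia. Qed.

Lemma pp_inj m j j' : j < 4 * m + 3 -> j' < 4 * m + 3 -> pp m j = pp m j' -> j = j'.
Proof.
rewrite /pp => H H'; repeat case: ifP; lia.
Qed.

Definition D m j := if j <= 2 * m then 2 * m + 1 - j else if j == 2 * m + 1 then 2 * m + 1 else 6 * m + 4 - j.

Lemma pp_dist m j : 0 < j < 4 * m + 3 ->
  (pp m j - pp m j.-1) + (pp m j.-1 - pp m j) = D m j.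
Proof.
rewrite /pp /D => H; repeat case: ifP; lia.
Qed.


Lemma prv_spec m i : i < 4 * m + 3 ->
  (i = 0 /\ prv m i = 4 * m + 2) \/ (0 < i /\ prv m i = i.-1).
Proof. rewrite /prv; case: ifP; lia. Qed.

Lemma prv_lt m i : i < 4 * m + 3 -> prv m i < 4 * m + 3.
Proof. rewrite /prv; case: ifP; lia. Qed.

Lemma prv_inj m i i' : i < 4 * m + 3 -> i' < 4 * m + 3 -> prv m i = prv m i' -> i = i'.
Proof. rewrite /prv; case: ifP; case: ifP; lia. Qed.

Definition key m i d := if d == 0 then prv m i else i.
Definition hi m i d := (key m i d %% 2 == 1) == (d == 0).

Definition G m i d :=
  if d == 1 then (if i == 0 then 8 * m + 6 else D m i)
  else if hi m i d then 8 * m + 7 + pp m (key m i d) else 4 * m + 3 + pp m (key m i d).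

Lemma D_inj m i i' : 0 < i < 4 * m + 3 -> 0 < i' < 4 * m + 3 -> D m i = D m i' -> i = i'.
Proof. rewrite /D; repeat case: ifP; lia. Qed.

Lemma D_bound m i : 0 < i < 4 * m + 3 -> 0 < D m i <= 4 * m + 2.
Proof. rewrite /D; repeat case: ifP; lia. Qed.

Lemma key_lt m i d : i < 4 * m + 3 -> key m i d < 4 * m + 3.
Proof. rewrite /key; case: ifP => // _; exact: prv_lt. Qed.

Lemma G_inj m i i' d d' : i < 4 * m + 3 -> i' < 4 * m + 3 -> d < 3 -> d' < 3 ->
  G m i d = G m i' d' -> i = i' /\ d = d'.
Proof.
move=> Hi Hi' Hd Hd'.
have Hk := key_lt d Hi; have Hk' := key_lt d' Hi'.
have B1 := pp_bound Hk; have B2 := pp_bound Hk'.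
rewrite /G.
case: (d =P 1) => E1; case: (d' =P 1) => E2.
- have := @D_inj m i i'; have := @D_bound m i; have := @D_bound m i'.
  case: ifP; case: ifP; lia.
- have := @D_bound m i; case: ifP; case: ifP; lia.
- have := @D_bound m i'; case: ifP; case: ifP; lia.
move=> HG.
have Hpp : hi m i d = hi m i' d' /\ pp m (key m i d) = pp m (key m i' d').
  move: HG; case: ifP; case: ifP; lia.
case: Hpp => Hh Hp.
have Hkk := pp_inj Hk Hk' Hp.
move: Hh Hkk; rewrite /hi /key.
have := @prv_inj m i i' Hi Hi'.
case: (d =P 0) => E3; case: (d' =P 0) => E4; case: eqP; case: eqP; lia.
Qed.

Lemma G_bound m i d : i < 4 * m + 3 -> d < 3 -> 0 < G m i d <= 3 * (4 * m + 3).
Proof.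
move=> Hi Hd.
have Hk := key_lt d Hi; have B1 := pp_bound Hk.
have := @D_bound m i.
rewrite /G; repeat case: ifP; lia.
Qed.


Definition val3 m i d := if d == 0 then av m i else if d == 1 then bv m i else cv m i.

Lemma val3_abs m i d : i < 4 * m + 3 -> d < 3 -> `|val3 m i d|%N = G m i d.
Proof.
move=> Hi Hd.
rewrite /val3 /G /hi /key.
case: (d =P 0) => E0.
  subst d; rewrite /= ?eqxx ?eqb_id /av /vv; repeat (case: ifP => ? /=); lia.
case: (d =P 1) => E1.
  have Hd2 := @pp_dist m i.
  subst d; rewrite /= /bv /vv; repeat (case: ifP => ? /=); lia.
rewrite /= ?eqbF_neg /cv /vv; repeat (case: ifP => ? /=); lia.
Qed.


Definition nxtd m i d := if d == 0 then i else if d == 1 then nxt m i else nxt m (nxt m i).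

Lemma nxt_lt m i : i < 4 * m + 3 -> nxt m i < 4 * m + 3.
Proof. rewrite /nxt; case: ifP; lia. Qed.

Lemma nxtd_lt m i d : i < 4 * m + 3 -> nxtd m i d < 4 * m + 3.
Proof. move=> H; rewrite /nxtd; case: ifP => // _; case: ifP => _; rewrite ?nxt_lt //. Qed.

Lemma nxt_prv m i k : i < 4 * m + 3 -> k < 4 * m + 3 -> (k == nxt m i) = (i == prv m k).
Proof. rewrite /nxt /prv => Hi Hk; case: ifP; case: ifP; case: eqP; case: eqP; lia. Qed.

Lemma nxt2_prv2 m i k : i < 4 * m + 3 -> k < 4 * m + 3 ->
  (k == nxt m (nxt m i)) = (i == prv m (prv m k)).
Proof.
move=> Hi Hk; rewrite nxt_prv ?nxt_lt // eq_sym nxt_prv ?prv_lt //.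
Qed.

Lemma excl m i : i < 4 * m + 3 ->
  [/\ (i == nxt m i) = false, (i == nxt m (nxt m i)) = false & (nxt m i == nxt m (nxt m i)) = false].
Proof. rewrite /nxt => Hi; split; repeat case: ifP; case: eqP; lia. Qed.

Lemma Aval_nxtd m i d : i < 4 * m + 3 -> d < 3 -> Aval m i (nxtd m i d) = Some (val3 m i d).
Proof.
move=> Hi Hd; case: (excl Hi) => E1 E2 E3.
rewrite /Aval /nxtd /val3.
case: (d =P 0) => D0; first by rewrite eqxx.
case: (d =P 1) => D1; first by rewrite eq_sym E1 eqxx.
by rewrite eq_sym E2 eq_sym E3 eqxx.
Qed.

Lemma Aval_some m i k y : i < 4 * m + 3 -> Aval m i k = Some y ->
  exists2 d, d < 3 & (k = nxtd m i d /\ y = val3 m i d).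
Proof.
move=> Hi; rewrite /Aval /nxtd /val3.
case: (k =P i) => [-> [<-]|_]; first by exists 0.
case: (k =P nxt m i) => [-> [<-]|_]; first by exists 1.
case: (k =P nxt m (nxt m i)) => [-> [<-]|_ //]; by exists 2.
Qed.

Lemma entry_dec m i k : i < 4 * m + 3 ->
  entry (Aval m i k) = ((if k == i then av m i else 0) + (if k == nxt m i then bv m i else 0)
    + (if k == nxt m (nxt m i) then cv m i else 0))%R.
Proof.
move=> Hi; case: (excl Hi) => E1 E2 E3; rewrite /Aval /entry.
case: (k =P i) => [->|_]; first by rewrite E1 E2 addr0 addr0.
case: (k =P nxt m i) => [->|_]; first by rewrite E3 add0r addr0.
case: (k =P nxt m (nxt m i)) => _; by rewrite /= ?add0r ?addr0.
Qed.

Lemma some_dec m i k : i < 4 * m + 3 ->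
  (if Aval m i k != None then 1 else 0) = (if k == i then 1 else 0) + (if k == nxt m i then 1 else 0)
    + (if k == nxt m (nxt m i) then 1 else 0).
Proof.
move=> Hi; case: (excl Hi) => E1 E2 E3; rewrite /Aval.
case: (k =P i) => [->|_]; first by rewrite E1 E2.
case: (k =P nxt m i) => [->|_]; first by rewrite E3.
by case: (k =P nxt m (nxt m i)).
Qed.

Lemma sum_ind_int n c (F : nat -> int) : c < n ->
  (\sum_(k < n) (if (k : nat) == c then F k else 0) = F c)%R.
Proof.
move=> H; rewrite (bigD1 (Ordinal H)) //= eqxx big1 ?addr0 // => k Hk.
case: eqP => // E; exfalso; move/eqP: Hk; apply; exact: val_inj.
Qed.

Lemma sum_ind_nat n c (F : nat -> nat) : c < n ->
  \sum_(k < n) (if (k : nat) == c then F k else 0) = F c.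
Proof.
move=> H; rewrite (bigD1 (Ordinal H)) //= eqxx big1 ?addn0 // => k Hk.
case: eqP => // E; exfalso; move/eqP: Hk; apply; exact: val_inj.
Qed.


Lemma vv0 m : vv m 0 = Posz (7 * m + 6).
Proof. rewrite /vv /pp mod0n div0n leq0n /=; lia. Qed.

Lemma vvN m : vv m (4 * m + 2) = Posz (9 * m + 7).
Proof.
have E1 : (4 * m + 2) %% 2 = 0 by lia.
have E2 : (4 * m + 2 <= 2 * m) = false by lia.
have E3 : 4 * m + 2 - (2 * m + 1) = 2 * m + 1 by lia.
have E4 : (2 * m + 1) %% 2 = 1 by lia.
have E5 : (2 * m + 1) %/ 2 = m by lia.
rewrite /vv /pp E1 E2 E3 E4 E5 /=; lia.
Qed.

Lemma hrow_id m i : i < 4 * m + 3 ->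
  (av m i + bv m i + cv m i = (if i == 0 then -1 else 0) * Posz (2 * (4 * m + 3) * 3 + 1))%R.
Proof.
move=> Hi; case: i Hi => [|i] Hi.
  rewrite /av /bv /cv /prv /= vv0 vvN; lia.
rewrite /av /bv /cv /prv /=; lia.
Qed.

Lemma hcol_id m k : k < 4 * m + 3 ->
  (av m k + bv m (prv m k) + cv m (prv m (prv m k)) =
     (if k == 1 then -1 else 0) * Posz (2 * (4 * m + 3) * 3 + 1))%R.
Proof.
move=> Hk; case: k Hk => [|[|k]] Hk.
- rewrite /av /bv /cv /prv /=.
  have -> : (4 * m + 2 == 0) = false by lia.
  have -> : (4 * m + 2).-1 = 4 * m + 1 by lia.
  lia.
- rewrite /av /bv /cv /prv /= vv0 vvN; lia.
- rewrite /av /bv /cv /prv /=; lia.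
Qed.

Lemma modM (c : int) M : ((c * Posz M) %% Posz M)%Z = 0%R.
Proof. exact: modzMl. Qed.


Lemma G_surj m x : 0 < x <= 3 * (4 * m + 3) ->
  exists i, exists d, [/\ i < 4 * m + 3, d < 3 & G m i d = x].
Proof.
move=> Hx.
pose g := fun z : 'I_(4 * m + 3) * 'I_3 => (inord (G m z.1 z.2) : 'I_(3 * (4 * m + 3)).+1).
have gK : forall z, (g z : nat) = G m z.1 z.2.
  move=> z; rewrite /g inordK //; have := G_bound (ltn_ord z.1) (ltn_ord z.2); lia.
have ginj : injective g.
  move=> [i d] [i' d'] /(congr1 (@nat_of_ord _)); rewrite !gK /= => E.
  case: (G_inj (ltn_ord i) (ltn_ord i') (ltn_ord d) (ltn_ord d') E) => E1 E2.
  by congr pair; apply: val_inj.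
have Hsub : g @: setT \subset [set~ ord0].
  apply/subsetP => y /imsetP [[i d] _ ->]; rewrite in_setC1; apply/eqP => /(congr1 (@nat_of_ord _)).
  rewrite gK /=; have := G_bound (ltn_ord i) (ltn_ord d); lia.
have Hc : #|[set~ (ord0 : 'I_(3 * (4 * m + 3)).+1)]| <= #|g @: setT|.
  by rewrite cardsC1 card_imset // cardsT card_prod !card_ord /=; lia.
have Heq : g @: setT = [set~ ord0].
  by apply/eqP; rewrite eqEcard Hsub Hc.
have : (inord x : 'I_(3 * (4 * m + 3)).+1) \in [set~ ord0].
  rewrite in_setC1; apply/eqP => /(congr1 (@nat_of_ord _)); rewrite inordK /=; lia.
rewrite -Heq => /imsetP [[i d] _ Ez].
exists i, d; split => //; have := gK (i, d); rewrite -Ez inordK /=; lia.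
Qed.


Definition Arr m : parray (4 * m + 3) := fun i k => Aval m i k.
Arguments Arr : clear implicits.

Lemma heff m : is_heffter (4 * m + 3) 3 (Arr m).
Proof.
have L1 : forall i, i < 4 * m + 3 -> nxt m i < 4 * m + 3 by move=> i; exact: nxt_lt.
rewrite /is_heffter /Arr; split; [|split; [|split; [|split; [|split]]]].
- move=> i; rewrite -sum1dep_card big_mkcond /=.
  under eq_bigr => j _ do rewrite (some_dec _ (ltn_ord i)).
  rewrite !big_split /=.
  rewrite (sum_ind_nat (fun _ => 1)) ?(sum_ind_nat (fun _ => 1)) ?L1 //.
- move=> k; rewrite -sum1dep_card big_mkcond /=.
  rewrite (eq_bigr (fun i : 'I_(4 * m + 3) => (if (i : nat) == k then 1 else 0) +
     (if (i : nat) == prv m k then 1 else 0) + (if (i : nat) == prv m (prv m k) then 1 else 0))); last first.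
    move=> i _; rewrite some_dec // (eq_sym (k : nat)) nxt_prv // nxt2_prv2 //.
  rewrite !big_split /= (sum_ind_nat (fun _ => 1)) ?(sum_ind_nat (fun _ => 1)) ?prv_lt //.
- move=> i j x /(Aval_some (ltn_ord i)) [d Hd [_ ->]]; rewrite val3_abs //.
  have := G_bound (ltn_ord i) Hd; lia.
- move=> i.
  under eq_bigr => j _ do rewrite (entry_dec _ (ltn_ord i)).
  rewrite !big_split /=.
  rewrite (sum_ind_int (fun _ => av m i)) ?(sum_ind_int (fun _ => bv m i))
    ?(sum_ind_int (fun _ => cv m i)) ?L1 //.
  by rewrite hrow_id // modzMl.
- move=> k.
  rewrite (eq_bigr (fun i : 'I_(4 * m + 3) => ((if (i : nat) == k then av m i else 0) +
     (if (i : nat) == prv m k then bv m i else 0) + (if (i : nat) == prv m (prv m k) then cv m i else 0))%R)); last first.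
    move=> i _; rewrite entry_dec // (eq_sym (k : nat)) nxt_prv // nxt2_prv2 //.
  rewrite !big_split /= (sum_ind_int (av m)) ?(sum_ind_int (bv m)) ?(sum_ind_int (cv m)) ?prv_lt //.
  by rewrite hcol_id // modzMl.
- move=> x Hx.
  have [i0 [d0 [Hi0 Hd0 HG]]] : exists i, exists d, [/\ i < 4 * m + 3, d < 3 & G m i d = x].
    apply: G_surj; lia.
  have Hk0 := nxtd_lt d0 Hi0.
  pose q0 : 'I_(4 * m + 3) * 'I_(4 * m + 3) := (Ordinal Hi0, Ordinal Hk0).
  suff -> : [set p : 'I_(4 * m + 3) * 'I_(4 * m + 3) | (Aval m p.1 p.2 == Some (Posz x))
          || (Aval m p.1 p.2 == Some (- Posz x)%R)] = [set q0] by rewrite cards1.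
  apply/setP => -[i k]; rewrite !inE /=.
  apply/idP/idP.
  + have H : forall y, Aval m i k = Some y -> `|y|%N = x -> (i, k) == q0.
      move=> y /(Aval_some (ltn_ord i)) [d Hd [Ek Ey]] Hy.
      have E : G m i d = G m i0 d0 by rewrite HG -Hy Ey val3_abs.
      case: (G_inj (ltn_ord i) Hi0 Hd Hd0 E) => Ei Ed.
      apply/eqP; congr pair; apply: val_inj => //=; by rewrite Ek Ei Ed.
    case/orP => /eqP E; apply: (H _ E); lia.
  + move/eqP => [-> ->] /=.
    rewrite Aval_nxtd //.
    have := val3_abs Hi0 Hd0; rewrite HG.
    case: (val3 m i0 d0) => [a|a] /= Ea.
      by rewrite Ea eqxx.
    by apply/eqP; congr Some; lia.
Qed.

Theorem lemma4p1 (n : nat) :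
  n %% 4 = 3 -> 7 <= n -> exists A : parray n, is_heffter n 3 A.
Proof.
move=> H1 H2; have -> : n = 4 * (n %/ 4) + 3 by lia.
by exists (Arr (n %/ 4)); apply: heff.
Qed.
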